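(* Let $d\ge2$ and let $\rho_{DS}=\sum_{\mathbf k}p_{\mathbf k}|D_{\mathbf k}\rangle\langle D_{\mathbf k}|$ be a diagonal symmetric state on $(\mathbb{C}^d)^{\otimes 4}$. Let $M^{(4)}(\rho_{DS})$ be the $\frac{d^3+d}{2}\times\frac{d^3+d}{2}$ matrix $$M^{(4)}(\rho_{DS})=\bar M\;\oplus\;\bigoplus_{0\le i<j\le d-1} M_{ij},$$ where $\bar M$ is the $s\times s$ matrix, $s=d(d+1)/2$, indexed by the ordered list $r_1,\dots,r_s$ of pairs $(a,b)$ with $0\le a\le b\le d-1$, with entries $\bar M_{r_\alpha r_\beta}=\bar p_{r_\alpha r_\beta}$, and each $M_{ij}$ is the $d\times d$ matrix with entries $(M_{ij})_{ab}=\bar p_{ijab}$. Then $\rho_{DS}$ is PPT if and only if $M^{(4)}(\rho_{DS})\in\mathcal{DNN}_{\frac{d^3+d}{2}}$.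
   Context: For $N=4$ and local dimension $d$: $\mathbf k=(k_0,\dots,k_{d-1})$, $k_i\ge0$, $\sum k_i=4$, and $|D_{\mathbf k}\rangle=\binom{4}{\mathbf k}^{-1/2}\sum_{\pi}\pi\big(|0\rangle^{\otimes k_0}\otimes\cdots\otimes|d-1\rangle^{\otimes k_{d-1}}\big)$, summing over distinct permutations of the tensor factors, $\binom{4}{\mathbf k}=\frac{4!}{k_0!\cdots k_{d-1}!}$. A diagonal symmetric state has $p_{\mathbf k}\ge0$, $\sum p_{\mathbf k}=1$. For indices $a,b,c,e$, $p_{abce}$ is the coefficient of the Dicke state with index multiset $\{a,b,c,e\}$ and $\bar p_{abce}=p_{abce}/\binom{4}{\mathbf k}$; for pairs $r_\alpha=(a,b)$, $r_\beta=(c,e)$, $\bar p_{r_\alpha r_\beta}=\bar p_{abce}$. PPT means the partial transpose with respect to every bipartition of the four parties ($1:3$ and $2:2$) is positive semidefinite. $\mathcal{DNN}_n$ is the cone of $n\times n$ positive semidefinite matrices with non-negative entries. *)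

(* Defs.v *)
(* Scalars: an arbitrary numClosedFieldType C (e.g. complex
   numbers over a real closed field); states are operators on (C^d)^{(x)4},
   represented as functions on pairs of basis indices x : {ffun 'I_4 -> 'I_d}. *)
From mathcomp Require Import all_boot all_order all_algebra.
Set Implicit Arguments. Unset Strict Implicit. Unset Printing Implicit Defensive.
Import Order.TTheory GRing.Theory Num.Theory.
Local Open Scope ring_scope.

Section Defs.
Variable C : numClosedFieldType.

Definition psd (I : finType) (A : I -> I -> C) : Prop :=
  (forall i j, A j i = (A i j)^*) /\
  (forall v : I -> C, 0 <= \sum_i \sum_j (v i)^* * A i j * v j).

Definition dnn (I : finType) (A : I -> I -> C) : Prop :=
  psd A /\ (forall i j, 0 <= A i j).

Variable d : nat.

Definition basis4 := {ffun 'I_4 -> 'I_d}.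

Definition occ (x : basis4) : {ffun 'I_d -> 'I_5} :=
  [ffun i => inord #|[set j | x j == i]|].

Definition valid_k (k : {ffun 'I_d -> 'I_5}) : bool :=
  (\sum_i (k i : nat) == 4)%N.

Definition multinom (k : {ffun 'I_d -> 'I_5}) : nat :=
  (4`! %/ \prod_i (k i)`!)%N.

(* Dicke state |D_k>: normalized sum of the distinct permutations of
   |0>^{k_0} ... |d-1>^{k_{d-1}}, i.e. of the basis vectors with occupation k *)
Definition dicke (k : {ffun 'I_d -> 'I_5}) (x : basis4) : C :=
  if occ x == k then (sqrtC (multinom k)%:R)^-1 else 0.

Definition rhoDS (p : {ffun 'I_d -> 'I_5} -> C) (x y : basis4) : C :=
  \sum_(k | valid_k k) p k * dicke k x * (dicke k y)^*.

Definition diag_sym_weights (p : {ffun 'I_d -> 'I_5} -> C) : Prop :=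
  (forall k, valid_k k -> 0 <= p k) /\ \sum_(k | valid_k k) p k = 1.

Definition ptrans (S : {set 'I_4}) (A : basis4 -> basis4 -> C) (x y : basis4) : C :=
  A [ffun j => if j \in S then y j else x j] [ffun j => if j \in S then x j else y j].

(* PPT: partial transpose w.r.t. every bipartition (1:3 and 2:2) is PSD;
   a bipartition S : S^c is given by a nonempty proper subset S. *)
Definition PPT (A : basis4 -> basis4 -> C) : Prop :=
  forall S : {set 'I_4}, (0 < #|S| < 4)%N -> psd (ptrans S A).

Definition tup4 (a b c e : 'I_d) : basis4 :=
  [ffun j : 'I_4 => nth a [:: a; b; c; e] j].

Definition pbar (p : {ffun 'I_d -> 'I_5} -> C) (a b c e : 'I_d) : C :=
  p (occ (tup4 a b c e)) / (multinom (occ (tup4 a b c e)))%:R.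

Definition pairIdx := {q : 'I_d * 'I_d | (q.1 <= q.2)%N}.
Definition blkIdx := {t : ('I_d * 'I_d) * 'I_d | (t.1.1 < t.1.2)%N}.
Definition M4idx := (pairIdx + blkIdx)%type.

Definition Mbar (p : {ffun 'I_d -> 'I_5} -> C) (r s : pairIdx) : C :=
  pbar p (val r).1 (val r).2 (val s).1 (val s).2.

Definition Mij (p : {ffun 'I_d -> 'I_5} -> C) (i j a b : 'I_d) : C :=
  pbar p i j a b.

Definition M4 (p : {ffun 'I_d -> 'I_5} -> C) (u v : M4idx) : C :=
  match u, v with
  | inl r, inl s => Mbar p r s
  | inr t, inr t' =>
      if (val t).1 == (val t').1 then Mij p (val t).1.1 (val t).1.2 (val t).2 (val t').2
      else 0
  | _, _ => 0
  end.

End Defs.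

(* Main.v *)
Require Import Defs.
From mathcomp Require Import all_boot all_order all_algebra.
From mathcomp Require Import zify ring lra.
Set Implicit Arguments. Unset Strict Implicit. Unset Printing Implicit Defensive.
Import Order.TTheory GRing.Theory Num.Theory.
Local Open Scope ring_scope.


Definition pk (d : nat) (i0 : 'I_d) (nu : 'I_d -> nat) : 'I_d :=
  odflt i0 [pick b | (0 < nu b)%N].

Lemma pk_pos d (i0 : 'I_d) nu : (0 < \sum_i nu i)%N -> (0 < nu (pk i0 nu))%N.
Proof.
rewrite /pk; case: pickP => [b hb|h] //=.
by rewrite big1 // => i _; move: (h i); case: (nu i).
Qed.

Lemma le_two d (nu : 'I_d -> nat) i b : i != b -> (nu i + nu b <= \sum_j nu j)%N.
Proof.
move=> ne; rewrite (bigD1 b) //= (bigD1 i) /=; last by [].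
lia.
Qed.

Lemma le_one d (nu : 'I_d -> nat) i : (nu i <= \sum_j nu j)%N.
Proof. by rewrite (bigD1 i) //= leq_addr. Qed.

Lemma one_hot d (i0 : 'I_d) nu : (\sum_i nu i)%N = 1%N ->
  forall i, nu i = (pk i0 nu == i) :> nat.
Proof.
move=> hs i; have hb := pk_pos i0 (nu := nu); rewrite hs in hb; have {}hb := hb isT.
case: eqP => [<-|ne].
  by have := le_one nu (pk i0 nu); lia.
have : i != pk i0 nu by apply/eqP => E; apply: ne.
by move/(le_two nu); lia.
Qed.

Lemma sum_delta d (b : 'I_d) : (\sum_i (b == i))%N = 1%N.
Proof. by rewrite (bigD1 b) //= eqxx big1 // => i /negbTE; rewrite eq_sym => ->. Qed.

Lemma two_hot d (i0 : 'I_d) nu : (\sum_i nu i)%N = 2%N ->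
  forall i, nu i = ((pk i0 nu == i) + (pk i0 (fun j => nu j - (pk i0 nu == j)) == i))%N.
Proof.
move=> hs; set b := pk i0 nu; set nu' := fun j => _.
have hb : (0 < nu b)%N by apply: pk_pos; rewrite hs.
have le j : ((b == j) <= nu j)%N by case: eqP => [<-|]. 
have s1 : (\sum_i nu' i)%N = 1%N.
  have : (\sum_i nu' i + \sum_i (b == i))%N = 2%N.
    rewrite -big_split -hs; apply: eq_bigr => j _; rewrite /nu'.
    by change (nu j - (b == j) + (b == j) = nu j)%N; have := le j; lia.
  by rewrite sum_delta; lia.
move=> i; rewrite -(one_hot i0 s1 i) /nu'; have := le i; lia.
Qed.

Lemma mkpair_proof d (a b : 'I_d) :
  ((if (a <= b)%N then (a, b) else (b, a)).1 <= (if (a <= b)%N then (a, b) else (b, a)).2)%N.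
Proof. by case: (leqP a b) => h //=; apply: ltnW. Qed.

Definition mkpair d (a b : 'I_d) : pairIdx d :=
  exist _ (if (a <= b)%N then (a, b) else (b, a)) (mkpair_proof a b).

Lemma mkpair_cnt d (a b : 'I_d) i :
  (((val (mkpair a b)).1 == i) + ((val (mkpair a b)).2 == i))%N = ((a == i) + (b == i))%N.
Proof. by rewrite /=; case: (leqP a b) => _ //=; rewrite addnC. Qed.

Lemma fiberQ (C : numClosedFieldType) (I J : finType) (A : pred I) (f : I -> J)
  (F : J -> J -> C) (v : I -> C) :
  \sum_(x | A x) \sum_(y | A y) (v x)^* * F (f x) (f y) * v y =
  \sum_a \sum_b (\sum_(x | A x && (f x == a)) v x)^* * F a b *
                 (\sum_(y | A y && (f y == b)) v y).
Proof.
rewrite (partition_big f predT) //=; apply: eq_bigr => a _.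
have E b : (\sum_(x | A x && (f x == a)) v x)^* * F a b *
                 (\sum_(y | A y && (f y == b)) v y) =
   \sum_(x | A x && (f x == a)) \sum_(y | A y && (f y == b)) (v x)^* * F a b * v y.
  rewrite rmorph_sum /= !mulr_suml; apply: eq_bigr => x _.
  by rewrite mulr_sumr.
under [RHS]eq_bigr => b _ do rewrite E.
rewrite [RHS]exchange_big /=; apply: eq_bigr => x /andP [_ /eqP fx].
rewrite (partition_big f predT) //=; apply: eq_bigr => b _.
by apply: eq_bigr => y /andP [_ /eqP fy]; rewrite fx fy.
Qed.

Lemma fiberQT (C : numClosedFieldType) (I J : finType) (f : I -> J)
  (F : J -> J -> C) (v : I -> C) :
  \sum_x \sum_y (v x)^* * F (f x) (f y) * v y =
  \sum_a \sum_b (\sum_(x | f x == a) v x)^* * F a b *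
                 (\sum_(y | f y == b) v y).
Proof. exact: (fiberQ xpredT). Qed.

Lemma blockQ (C : numClosedFieldType) (K G : finType) (B : K -> G -> G -> C)
  (w : K * G -> C) :
  \sum_u \sum_u' (w u)^* * (if u.1 == u'.1 then B u.1 u.2 u'.2 else 0) * w u' =
  \sum_k \sum_g \sum_g' (w (k, g))^* * B k g g' * w (k, g').
Proof.
pose F' k g k' g' := (w (k, g))^* * (if k == k' then B k g g' else 0) * w (k', g').
transitivity (\sum_u \sum_u' F' u.1 u.2 u'.1 u'.2).
  by apply: eq_bigr => [[k g]] _; apply: eq_bigr => [[k' g']] _.
rewrite -(pair_bigA _ (fun k g => \sum_u' F' k g u'.1 u'.2)).
apply: eq_bigr => k _; apply: eq_bigr => g _.
rewrite -(pair_bigA _ (F' k g)) (bigD1 k) //= [X in _ + X]big1 ?addr0; last first.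
  by move=> k' hk; apply: big1 => g' _; rewrite /F' eq_sym (negbTE hk) mulr0 mul0r.
by apply: eq_bigr => g' _; rewrite /F' eqxx.
Qed.

Section Work.
Variable C : numClosedFieldType.
Variable d : nat.
Variable p : {ffun 'I_d -> 'I_5} -> C.

Definition cntP (T : pred 'I_4) (x : basis4 d) (i : 'I_d) : nat :=
  (\sum_(j | T j) (x j == i))%N.
Definition cnt x i := cntP predT x i.
Definition al (S : {set 'I_4}) x i := cntP (fun j => j \notin S) x i.
Definition be (S : {set 'I_4}) x i := cntP (fun j => j \in S) x i.
Definition tofun (c : 'I_d -> nat) : {ffun 'I_d -> 'I_5} := [ffun i => inord (c i)].
Definition mix (S : {set 'I_4}) (x y : basis4 d) : basis4 d :=
  [ffun j => if j \in S then y j else x j].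
Definition Ph (k : {ffun 'I_d -> 'I_5}) : C := p k / (multinom k)%:R.

Lemma cnt_split S x i : cnt x i = (al S x i + be S x i)%N.
Proof. by rewrite /cnt /cntP (bigID (fun j => j \in S)) /= addnC. Qed.

Lemma cnt_le4 x i : (cnt x i <= 4)%N.
Proof.
rewrite /cnt /cntP; apply: (@leq_trans (\sum_(j < 4) 1)%N).
  by apply: leq_sum => j _; case: (_ == _).
by rewrite sum1_card card_ord.
Qed.

Lemma al_le4 S x i : (al S x i <= 4)%N.
Proof. by have := cnt_le4 x i; rewrite (cnt_split S); lia. Qed.
Lemma be_le4 S x i : (be S x i <= 4)%N.
Proof. by have := cnt_le4 x i; rewrite (cnt_split S); lia. Qed.

Lemma sum_cnt x : (\sum_i cnt x i)%N = 4%N.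
Proof.
rewrite /cnt /cntP exchange_big /=.
rewrite (eq_bigr (fun _ => 1%N)) ?sum1_card ?card_ord // => j _.
by rewrite (bigD1 (x j)) //= eqxx big1 // => i /negbTE; rewrite eq_sym => ->.
Qed.

Lemma occ_tofun (x : basis4 d) : occ x = tofun (cnt x).
Proof.
apply/ffunP => i; rewrite !ffunE; congr inord.
rewrite -sum1dep_card /cnt /cntP big_mkcond /=; apply: eq_bigr => j _.
by case: (_ == _).
Qed.

Lemma tofunK c i : (c i <= 4)%N -> val (tofun c i) = c i.
Proof. by move=> h; rewrite ffunE; apply: inordK. Qed.

Lemma tofun_eqP c c' : (forall i, c i <= 4)%N -> (forall i, c' i <= 4)%N ->
  reflect (forall i, c i = c' i) (tofun c == tofun c').
Proof.
move=> h h'; apply: (iffP eqP) => [E i|E].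
  by rewrite -(tofunK (h i)) -(tofunK (h' i)) E.
by apply/ffunP => i; rewrite !ffunE E.
Qed.

Lemma valid_tofun c : (\sum_i c i)%N = 4%N -> valid_k (tofun c).
Proof.
move=> hs; rewrite /valid_k; apply/eqP; rewrite -[RHS]hs; apply/eq_bigr => i _.
rewrite tofunK // -hs (bigD1 i) //=; lia.
Qed.

Lemma valid_occ (x : basis4 d) : valid_k (occ x).
Proof. rewrite occ_tofun; apply: valid_tofun; exact: sum_cnt. Qed.

Hypothesis pge0 : forall k, valid_k k -> 0 <= p k.

Lemma Ph_ge0 k : valid_k k -> 0 <= Ph k.
Proof. by move=> v; rewrite /Ph divr_ge0 ?ler0n ?pge0. Qed.

Lemma rho_val (x y : basis4 d) : rhoDS p x y = if occ x == occ y then Ph (occ x) else 0.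
Proof.
rewrite /rhoDS (bigD1 (occ x)) ?valid_occ //= big1; last first.
  by move=> k /andP [_ hk]; rewrite /dicke eq_sym (negbTE hk) mulr0 mul0r.
rewrite addr0 /dicke eqxx eq_sym; case: eqP => [_|_]; last by rewrite conjC0 mulr0.
rewrite geC0_conj ?invr_ge0 ?sqrtC_ge0 ?ler0n //.
rewrite /Ph -mulrA -invfM -expr2 sqrtCK.
by [].
Qed.


Lemma cnt_mix S x y i : cnt (mix S x y) i = (al S x i + be S y i)%N.
Proof.
rewrite (cnt_split S) /al /be /cntP; congr addn; apply: eq_bigr => j hj;
  by rewrite ffunE ?(negbTE hj) ?hj.
Qed.

Lemma Ph_congr c c' : (forall i, c i = c' i) -> Ph (tofun c) = Ph (tofun c').
Proof. by move=> h; congr Ph; apply/ffunP => i; rewrite !ffunE h. Qed.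

Lemma pt_val S x y : ptrans S (rhoDS p) x y =
  if [forall i, al S x i + be S y i == al S y i + be S x i]%N
  then Ph (tofun (fun i => al S x i + be S y i)%N) else 0.
Proof.
rewrite /ptrans rho_val -/(mix S x y) -/(mix S y x) !occ_tofun.
have h1 i : (cnt (mix S x y) i <= 4)%N by apply: cnt_le4.
have h2 i : (cnt (mix S y x) i <= 4)%N by apply: cnt_le4.
case: (tofun_eqP h1 h2) => H.
  have -> : [forall i, al S x i + be S y i == al S y i + be S x i]%N.
    by apply/forallP => i; rewrite -!cnt_mix H.
  by apply: Ph_congr => i; rewrite cnt_mix.
case: forallP => // H'; case: H => i; rewrite !cnt_mix; exact/eqP.
Qed.

Lemma cnt_tup (a b c e : 'I_d) i :
  cnt (tup4 a b c e) i = ((a == i) + (b == i) + (c == i) + (e == i))%N.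
Proof. by rewrite /cnt /cntP !big_ord_recl big_ord0 /tup4 !ffunE /= addn0 !addnA. Qed.

Lemma pbarE a b c e : pbar p a b c e =
  Ph (tofun (fun i => ((a == i) + (b == i) + (c == i) + (e == i))%N)).
Proof. by rewrite /pbar occ_tofun; apply: Ph_congr => i; rewrite cnt_tup. Qed.


Definition sig (k : {ffun 'I_d -> 'I_5}) : nat := (\sum_i val (k i))%N.

Lemma core (i0 : 'I_d)
  (hM : forall z : M4idx d -> C, 0 <= \sum_a \sum_b (z a)^* * M4 p a b * z b)
  (mu : 'I_d -> nat) (w : {ffun 'I_d -> 'I_5} -> C) :
  0 <= \sum_g \sum_g' (w g)^* *
     (if ((\sum_i mu i) + 2 * sig g == 4)%N && ((\sum_i mu i) + 2 * sig g' == 4)%N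
      then Ph (tofun (fun i => mu i + val (g i) + val (g' i))%N) else 0) * w g'.
Proof.
set m := (\sum_i mu i)%N.
set A := fun g => (m + 2 * sig g == 4)%N.
have -> : \sum_g \sum_g' (w g)^* *
     (if (m + 2 * sig g == 4)%N && (m + 2 * sig g' == 4)%N
      then Ph (tofun (fun i => mu i + val (g i) + val (g' i))%N) else 0) * w g' =
  \sum_(g | A g) \sum_(g' | A g') (w g)^* *
     Ph (tofun (fun i => mu i + val (g i) + val (g' i))%N) * w g'.
  rewrite [RHS]big_mkcond; apply: eq_bigr => g _; rewrite /A.
  case: ifP => hg; last by rewrite big1 // => g' _; rewrite /= mulr0 mul0r.
  rewrite [RHS]big_mkcond; apply: eq_bigr => g' _ /=.
  by case: ifP => _; rewrite ?mulr0 ?mul0r.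
have red (f : {ffun 'I_d -> 'I_5} -> M4idx d) :
  (forall g g', A g -> A g' ->
     Ph (tofun (fun i => mu i + val (g i) + val (g' i))%N) = M4 p (f g) (f g')) ->
  0 <= \sum_(g | A g) \sum_(g' | A g') (w g)^* *
     Ph (tofun (fun i => mu i + val (g i) + val (g' i))%N) * w g'.
  move=> hf.
  rewrite (eq_bigr (fun g => \sum_(g' | A g') (w g)^* * M4 p (f g) (f g') * w g')); last first.
    by move=> g hg; apply: eq_bigr => g' hg'; rewrite hf.
  by rewrite fiberQ; apply: hM.
have hm : m = 4%N \/ m = 2%N \/ m = 0%N \/ (forall g, ~~ A g).
  have gen n : n = 4%N \/ n = 2%N \/ n = 0%N \/ (forall s, n + 2 * s != 4)%N.
    case: n => [|[|[|[|[|n']]]]]; try by [left|right;left|right;right;left].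
    - by right; right; right => s; apply/eqP; lia.
    - by right; right; right => s; apply/eqP; lia.
    - by right; right; right => s; apply/eqP; lia.
  case: (gen m) => [->|[->|[->|h]]]; [by left|by right;left|by right;right;left|].
  by right; right; right => g; apply: h.
case: hm => [h4|[h2|[h0|hno]]]; last first.
- by rewrite big_pred0 // => g; apply/negbTE.
-
  have mu0 i : mu i = 0%N by have := le_one mu i; rewrite -/m h0; lia.
  pose nu (g : {ffun 'I_d -> 'I_5}) j := val (g j).
  pose b1 g := pk i0 (nu g).
  pose b2 g := pk i0 (fun j => nu g j - (b1 g == j))%N.
  apply: (red (fun g => inl (mkpair (b1 g) (b2 g)))) => g g' hg hg'.
  have e g0 : A g0 -> forall i, val (g0 i) = ((b1 g0 == i) + (b2 g0 == i))%N.
    by move=> hg0 i; apply: (two_hot i0 (nu := nu g0)); move: hg0; rewrite /A /sig /nu h0; lia.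
  rewrite /= /Mbar pbarE; apply: Ph_congr => i.
  have := mkpair_cnt (b1 g) (b2 g) i; have := mkpair_cnt (b1 g') (b2 g') i.
  rewrite mu0 (e g hg) (e g' hg'); lia.
-
  have [c1 [c2 [hle hmu]]] : exists c1 c2 : 'I_d, (c1 <= c2)%N /\
      forall i, mu i = ((c1 == i) + (c2 == i))%N.
    have := two_hot i0 (nu := mu) h2.
    set a1 := pk _ _; set a2 := pk _ _ => ha.
    case: (leqP a1 a2) => h; first by exists a1, a2.
    by exists a2, a1; split; [apply: ltnW | move=> i; rewrite ha addnC].
  pose b1 (g : {ffun 'I_d -> 'I_5}) := pk i0 (fun j => val (g j)).
  have e g0 : A g0 -> forall i, val (g0 i) = (b1 g0 == i) :> nat.
    by move=> hg0 i; apply: (one_hot i0 (nu := fun j => val (g0 j))); move: hg0; rewrite /A /sig h2; lia.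
  case: (eqVneq c1 c2) => [ec|nc].
  + apply: (red (fun g => inl (mkpair c1 (b1 g)))) => g g' hg hg'.
    rewrite /= /Mbar pbarE; apply: Ph_congr => i.
    have := mkpair_cnt c1 (b1 g) i; have := mkpair_cnt c1 (b1 g') i.
    rewrite hmu (e g hg) (e g' hg') -ec; lia.
  + have lt12 : (c1 < c2)%N by rewrite ltn_neqAle nc hle.
    pose t (b : 'I_d) : blkIdx d := exist _ ((c1, c2), b) lt12.
    apply: (red (fun g => inr (t (b1 g)))) => g g' hg hg'.
    rewrite /= eqxx /Mij pbarE; apply: Ph_congr => i.
    rewrite hmu (e g hg) (e g' hg'); lia.
-
  pose g0 : {ffun 'I_d -> 'I_5} := [ffun _ => ord0].
  have hA : A =1 pred1 g0.
    move=> g; rewrite /A h4 /=; apply/idP/eqP => [hg|->].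
      have : (sig g == 0)%N by lia.
      rewrite /sig sum_nat_eq0 => /forallP hz.
      by apply/ffunP => i; apply/val_inj; rewrite ffunE /=; apply/eqP; apply: hz.
    by rewrite /sig big1 // => i _; rewrite ffunE.
  rewrite (big_pred1 g0 hA) (big_pred1 g0 hA).
  have -> : (w g0)^* * Ph (tofun (fun i => mu i + val (g0 i) + val (g0 i))%N) * w g0
     = Ph (tofun (fun i => mu i + val (g0 i) + val (g0 i))%N) * (w g0 * (w g0)^*) by ring.
  apply: mulr_ge0; last exact: mul_conjC_ge0.
  apply: Ph_ge0; apply: valid_tofun.
  by rewrite -[RHS]h4; apply: eq_bigr => i _; rewrite ffunE /= !addn0.
Qed.


Definition fS (S : {set 'I_4}) (x : basis4 d) :
  ({ffun 'I_d -> 'I_5} * {ffun 'I_d -> 'I_5}) * {ffun 'I_d -> 'I_5} :=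
  ((tofun (fun i => al S x i - be S x i)%N, tofun (fun i => be S x i - al S x i)%N),
   tofun (fun i => minn (al S x i) (be S x i))).

Definition muK (k : {ffun 'I_d -> 'I_5} * {ffun 'I_d -> 'I_5}) (i : 'I_d) : nat :=
  (val (k.1 i) + val (k.2 i))%N.

Definition BK (k : {ffun 'I_d -> 'I_5} * {ffun 'I_d -> 'I_5}) (g g' : {ffun 'I_d -> 'I_5}) : C :=
  if ((\sum_i muK k i) + 2 * sig g == 4)%N && ((\sum_i muK k i) + 2 * sig g' == 4)%N
  then Ph (tofun (fun i => muK k i + val (g i) + val (g' i))%N) else 0.

Lemma mask_f S x : ((\sum_i muK (fS S x).1 i) + 2 * sig (fS S x).2 == 4)%N.
Proof.
have b1 i := al_le4 S x i; have b2 i := be_le4 S x i.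
rewrite /muK /sig /fS /=.
have -> : (\sum_i (val (tofun (fun i => al S x i - be S x i)%N i) +
                    val (tofun (fun i => be S x i - al S x i)%N i)))%N =
          (\sum_i (al S x i - be S x i + (be S x i - al S x i)))%N.
  by apply: eq_bigr => i _; rewrite !tofunK //; have := b1 i; have := b2 i; lia.
have -> : (\sum_i val (tofun (fun i => minn (al S x i) (be S x i)) i))%N =
          (\sum_i minn (al S x i) (be S x i))%N.
  by apply: eq_bigr => i _; rewrite !tofunK //; have := b1 i; have := b2 i; lia.
rewrite big_distrr -big_split /= -(sum_cnt x); apply/eqP/eq_bigr => i _.
by rewrite (cnt_split S); lia.
Qed.

Lemma entry_f S x y : ptrans S (rhoDS p) x y =
  if (fS S x).1 == (fS S y).1 then BK (fS S x).1 (fS S x).2 (fS S y).2 else 0.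
Proof.
have b1 z i := al_le4 S z i; have b2 z i := be_le4 S z i.
have bd1 z i : (al S z i - be S z i <= 4)%N by have := b1 z i; lia.
have bd2 z i : (be S z i - al S z i <= 4)%N by have := b2 z i; lia.
have hc : [forall i, al S x i + be S y i == al S y i + be S x i]%N = ((fS S x).1 == (fS S y).1).
  rewrite /fS /= xpair_eqE.
  apply/forallP/andP => [H|[/(tofun_eqP (bd1 x) (bd1 y)) H1 /(tofun_eqP (bd2 x) (bd2 y)) H2] i].
    split; [apply/(tofun_eqP (bd1 x) (bd1 y)) | apply/(tofun_eqP (bd2 x) (bd2 y))];
      by move=> i; have := eqP (H i); lia.
  by apply/eqP; have := H1 i; have := H2 i; lia.
rewrite pt_val hc; case: ifP => // hk.
rewrite /BK mask_f {1}(eqP hk) mask_f /=; apply: Ph_congr => i.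
move: hc; rewrite hk => /forallP /(_ i) /eqP H.
rewrite /muK /fS /= !tofunK //;
  by have := b1 x i; have := b1 y i; have := b2 x i; have := b2 y i; lia.
Qed.

Lemma ppt_of_M4 (i0 : 'I_d)
  (hM : forall z : M4idx d -> C, 0 <= \sum_a \sum_b (z a)^* * M4 p a b * z b)
  (S : {set 'I_4}) : psd (ptrans S (rhoDS p)).
Proof.
split.
  move=> x y; rewrite /ptrans !rho_val -/(mix S x y) -/(mix S y x) eq_sym.
  case: eqP => [E|_]; last by rewrite conjC0.
  by rewrite E geC0_conj // Ph_ge0 // valid_occ.
move=> v.
rewrite (eq_bigr (fun x => \sum_y (v x)^* *
   (if (fS S x).1 == (fS S y).1 then BK (fS S x).1 (fS S x).2 (fS S y).2 else 0) * v y)); last first.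
  by move=> x _; apply: eq_bigr => y _; rewrite entry_f.
rewrite (fiberQT (fS S) (fun u u' => if u.1 == u'.1 then BK u.1 u.2 u'.2 else 0)).
rewrite blockQ; apply: sumr_ge0 => k _.
exact: (core i0 hM (muK k)).
Qed.


Definition S23 : {set 'I_4} := [set j : 'I_4 | (2 <= j)%N].

Lemma card_S23 : #|S23| = 2%N.
Proof.
rewrite /S23 -sum1dep_card big_mkcond /=.
by rewrite !big_ord_recl big_ord0.
Qed.

Lemma al_tup (a b c e : 'I_d) i : al S23 (tup4 a b c e) i = ((a == i) + (b == i))%N.
Proof.
rewrite /al /cntP big_mkcond /= !big_ord_recl big_ord0 /S23 !inE /tup4 !ffunE /=.
by rewrite !addn0.
Qed.

Lemma be_tup (a b c e : 'I_d) i : be S23 (tup4 a b c e) i = ((c == i) + (e == i))%N.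
Proof.
rewrite /be /cntP big_mkcond /= !big_ord_recl big_ord0 /S23 !inE /tup4 !ffunE /=.
by rewrite !addn0.
Qed.

Lemma pbar_ge0 a b c e : 0 <= pbar p a b c e.
Proof. exact: (Ph_ge0 (valid_occ (tup4 a b c e))). Qed.

Lemma pbar_swap a b c e : pbar p a b c e = pbar p c e a b.
Proof. by rewrite !pbarE; apply: Ph_congr => i; lia. Qed.

Lemma pbar_swap34 a b c e : pbar p a b c e = pbar p a b e c.
Proof. by rewrite !pbarE; apply: Ph_congr => i; lia. Qed.

Lemma M4_ge0 u v : 0 <= M4 p u v.
Proof.
case: u v => [r|t] [s|t'] //=; first exact: pbar_ge0.
by case: ifP => _; [exact: pbar_ge0|].
Qed.

Lemma M4_herm u v : M4 p v u = (M4 p u v)^*.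
Proof.
rewrite geC0_conj ?M4_ge0 //.
case: u v => [r|t] [s|t'] //=; first exact: pbar_swap.
rewrite eq_sym; case: eqP => // E.
by rewrite /Mij E pbar_swap34.
Qed.

Definition psi (u : M4idx d) : basis4 d :=
  match u with
  | inl r => tup4 (val r).1 (val r).2 (val r).1 (val r).2
  | inr t => tup4 (val t).1.1 (val t).2 (val t).1.2 (val t).2
  end.

Lemma entry_psi u v : ptrans S23 (rhoDS p) (psi u) (psi v) = M4 p u v.
Proof.
rewrite pt_val.
case: u v => [[[a b] hab]|[[[i j] c] hij]] [[[a' b'] hab']|[[[i' j'] c'] hij']] /=;
  rewrite /= ?al_tup ?be_tup.
- rewrite ifT; last by apply/forallP => k; apply/eqP; rewrite !al_tup !be_tup; lia.
  by rewrite /Mbar pbarE /=; apply: Ph_congr => k; rewrite al_tup be_tup; lia.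
- have ne : (i' == j') = false by apply/eqP => E; move: hij'; rewrite E ltnn.
  rewrite ifF //; apply/negP => /forallP /(_ j') /eqP; rewrite !al_tup !be_tup eqxx ne.
  lia.
- have ne : (i == j) = false by apply/eqP => E; move: hij; rewrite E ltnn.
  rewrite ifF //; apply/negP => /forallP /(_ j) /eqP; rewrite !al_tup !be_tup eqxx ne.
  lia.
- have ne : (i == j) = false by apply/eqP => E; move: hij; rewrite E ltnn.
  have ne' : (i' == j') = false by apply/eqP => E; move: hij'; rewrite E ltnn.
  case: eqP => [[ei ej]|nij].
    subst i' j'; rewrite ifT; last by apply/forallP => k; apply/eqP; rewrite !al_tup !be_tup; lia.
    by rewrite /Mij pbarE /=; apply: Ph_congr => k; rewrite al_tup be_tup; lia.
  rewrite ifF //; apply/negP => /forallP H.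
  have Hi := eqP (H i); have Hj := eqP (H j); rewrite !al_tup !be_tup in Hi Hj.
  move: Hi Hj; rewrite !eqxx ne (eq_sym j i) ne.
  case: (eqVneq i' i) => [ei|ni]; last by lia.
  subst i'; rewrite ne.
  case: (eqVneq j' j) => [ej|nj]; first by subst j'; case: nij.
  by move=> _ /=; lia.
Qed.


Lemma M4_of_ppt (H : PPT (rhoDS p)) : dnn (M4 p).
Proof.
split; last exact: M4_ge0.
split; first exact: M4_herm.
move=> z.
have hS : (0 < #|S23| < 4)%N by rewrite card_S23.
have [_ hq] := H S23 hS.
rewrite (eq_bigr (fun a => \sum_b (z a)^* * ptrans S23 (rhoDS p) (psi a) (psi b) * z b));
  last by move=> a _; apply: eq_bigr => b _; rewrite entry_psi.
rewrite (fiberQT psi (ptrans S23 (rhoDS p))).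
exact: hq.
Qed.

End Work.



Theorem theorem8 (C : numClosedFieldType) (d : nat)
  (p : {ffun 'I_d -> 'I_5} -> C) :
  (2 <= d)%N -> diag_sym_weights p ->
  (PPT (rhoDS p) <-> dnn (M4 p)).
Proof.
move=> hd [hp _]; split => [H|hM]; first exact: M4_of_ppt.
have i0 : 'I_d := Ordinal (leq_trans (isT : (0 < 2)%N) hd).
case: hM => [[_ hq] _] S _.
exact: (ppt_of_M4 hp i0 hq).
Qed.
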